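(* Let $\mathbb{K}$ be a field of characteristic zero, let $p,q\in\mathbb{Z}^n_{\ge0}$ be nonzero vectors and let $\beta,\gamma\in\mathbb{K}^n$ be nonzero, non-proportional vectors. Suppose $\langle\beta,q\rangle=0$ and let $r\in\mathbb{Z}_{\ge0}$ be the smallest number such that $\langle\gamma,p+rq\rangle=0$. Then the Lie algebra $\mathfrak{g}(\Delta^q_\gamma,\Delta^p_\beta)$ generated by $\Delta^q_\gamma$ and $\Delta^p_\beta$ has dimension $r+2$ and is $(r+1)$-step nilpotent; moreover, the derivations $\Delta^q_\gamma,\Delta^p_\beta,\Delta^{p+q}_\beta,\ldots,\Delta^{p+rq}_\beta$ form a basis of this Lie algebra.
   Context: For $p\in\mathbb{Z}^n_{\ge0}$ and $\beta\in\mathbb{K}^n$, $\Delta^p_\beta:=x_1^{p_1}\cdots x_n^{p_n}\sum_{j=1}^n\beta_jx_j\partial_j$ (a derivation of $\mathbb{K}[x_1,\ldots,x_n]$, $\partial_j=\partial/\partial x_j$). $\langle\beta,u\rangle:=\sum_i\beta_iu_i$. The Lie bracket is the commutator of derivations. *)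

(* Defs.v *)
From mathcomp Require Import all_boot all_algebra.
From mathcomp Require Import mpoly.
Set Implicit Arguments. Unset Strict Implicit. Unset Printing Implicit Defensive.
Import GRing.Theory.
Local Open Scope ring_scope.

Section Defs.
Variables (K : fieldType) (n : nat).
Local Notation P := {mpoly K[n]}.
Local Notation Op := (P -> P).

Definition xmon (p : 'I_n -> nat) : P := \prod_(i < n) 'X_i ^+ p i.

Definition Delta (p : 'I_n -> nat) (beta : 'I_n -> K) : Op :=
  fun f => xmon p * \sum_(j < n) beta j *: ('X_j * mderiv j f).

Definition lie_bracket (u v : Op) : Op := fun f => u (v f) - v (u f).

Definition op0 : Op := fun _ => 0.
Definition op_comb (a : K) (u v : Op) : Op := fun f => a *: u f + v f.

Definition is_subspace (S : Op -> Prop) : Prop :=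
  S op0 /\ (forall a u v, S u -> S v -> S (op_comb a u v)).

Definition is_lie_subalgebra (S : Op -> Prop) : Prop :=
  is_subspace S /\ (forall u v, S u -> S v -> S (lie_bracket u v)).

Definition lie_gen (u1 u2 : Op) : Op -> Prop :=
  fun w => forall S, is_lie_subalgebra S -> S u1 -> S u2 -> S w.

Definition span_set (A : Op -> Prop) : Op -> Prop :=
  fun w => forall S, is_subspace S -> (forall u, A u -> S u) -> S w.

(* lower central series: lcs g 0 = g = g^1, lcs g (k+1) = [g, lcs g k] *)
Fixpoint lcs (g : Op -> Prop) (k : nat) : Op -> Prop :=
  match k with
  | 0 => g
  | k'.+1 => span_set (fun w => exists u v, g u /\ lcs g k' v /\ w = lie_bracket u v)
  end.

(* c-step nilpotent: g^{c+1} = 0 and g^c <> 0 (g^1 = g), c >= 1 *)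
Definition step_nilpotent (g : Op -> Prop) (c : nat) : Prop :=
  (0 < c)%N /\
  (forall w, lcs g c w -> forall f, w f = 0) /\
  (exists w, lcs g c.-1 w /\ exists f, w f != 0).

Definition lin_comb (l : seq Op) (c : nat -> K) : Op :=
  fun f => \sum_(i < size l) c i *: (nth op0 l i) f.

Definition lin_indep (l : seq Op) : Prop :=
  forall c : nat -> K, (forall f, lin_comb l c f = 0) ->
    forall i, (i < size l)%N -> c i = 0.

Definition is_basis (g : Op -> Prop) (l : seq Op) : Prop :=
  lin_indep l /\ (forall w, g w <-> exists c, w = lin_comb l c).

Definition has_dim (g : Op -> Prop) (d : nat) : Prop :=
  exists l, size l = d /\ is_basis g l.

End Defs.

(* Main.v *)
From HB Require Import structures.
Require Import Defs.
From mathcomp Require Import all_boot all_algebra.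
From mathcomp Require Import mpoly.
From mathcomp Require Import ring zify.
From Stdlib Require Import FunctionalExtensionality.
Set Implicit Arguments. Unset Strict Implicit. Unset Printing Implicit Defensive.
Import GRing.Theory.
Local Open Scope ring_scope.

Section Alg.
Variables (K : fieldType) (n : nat).
Local Notation P := {mpoly K[n]}.

Definition Eop (v : 'I_n -> K) (f : P) : P := \sum_(j < n) v j *: ('X_j * mderiv j f).

Lemma Delta_E a v f : Delta a v f = xmon K a * Eop v f.
Proof. by []. Qed.

Lemma Eop_is_linear v : linear (Eop v).
Proof.
move=> c f g; rewrite /Eop scaler_sumr -big_split; apply: eq_bigr => j _ /=.
by rewrite linearP mulrDr scalerDr -scalerAr !scalerA mulrC.
Qed.

HB.instance Definition _ v := GRing.isLinear.Build K P P _ (Eop v) (Eop_is_linear v).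

Lemma EopZ v c f : Eop v (c *: f) = c *: Eop v f.
Proof. by have := Eop_is_linear v c f 0; rewrite !addr0 raddf0 addr0. Qed.

Lemma EopD v f g : Eop v (f + g) = Eop v f + Eop v g.
Proof. by have := Eop_is_linear v 1 f g; rewrite !scale1r. Qed.

Lemma Eop0 v : Eop v 0 = 0.
Proof. by have := EopZ v 0 0; rewrite !scale0r. Qed.

Lemma Eop_sum v I (s : seq I) (F : I -> P) :
  Eop v (\sum_(i <- s) F i) = \sum_(i <- s) Eop v (F i).
Proof. exact: (big_morph (Eop v) (EopD v) (Eop0 v)). Qed.

Lemma Delta_is_linear (a : 'I_n -> nat) (v : 'I_n -> K) : linear (Delta a v).
Proof.
move=> c f g; rewrite !Delta_E linearP /= mulrDr scalerAr //.
Qed.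

HB.instance Definition _ (a : 'I_n -> nat) (v : 'I_n -> K) := GRing.isLinear.Build K P P _ (Delta a v) (Delta_is_linear a v).

Definition dot (v : 'I_n -> K) (a : 'I_n -> nat) := \sum_(i < n) v i * (a i)%:R.
Definition mnm (a : 'I_n -> nat) : 'X_{1..n} := [multinom a i | i < n].

Lemma xmonE a : xmon K a = 'X_[mnm a] :> P.
Proof. by rewrite mpolyXE_id /xmon; apply: eq_bigr => i _; rewrite mnmE. Qed.

Lemma Eop_X v m : Eop v 'X_[m] = (\sum_i v i * (m i)%:R) *: ('X_[m] : P).
Proof.
rewrite /Eop scaler_suml; apply: eq_bigr => j _.
rewrite mderivX -scalerAr scalerA.
have [->|nz] := eqVneq (m j) 0%N; first by rewrite mulr0 !scale0r.
by rewrite -mpolyXD addmC submK // lep1mP.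
Qed.

Lemma Eop_xmon v a : Eop v (xmon K a) = dot v a *: xmon K a.
Proof.
rewrite xmonE Eop_X; congr (_ *: _); apply: eq_bigr => i _; by rewrite mnmE.
Qed.

Lemma Eop_M v f g : Eop v (f * g) = Eop v f * g + f * Eop v g.
Proof.
rewrite /Eop mulr_suml mulr_sumr -big_split; apply: eq_bigr => j _ /=.
rewrite mderivM mulrDr scalerDr -scalerAl -scalerAr; congr (_ *: _ + _ *: _).
  by rewrite mulrA.
by rewrite mulrCA.
Qed.

Lemma Eop_comm v w f : Eop v (Eop w f) = Eop w (Eop v f).
Proof.
rewrite (mpolyE f) (Eop_sum w (msupp f)) (Eop_sum v (msupp f)) (Eop_sum v (msupp f)) (Eop_sum w (msupp f)); apply: eq_bigr => m _.
by rewrite !EopZ !Eop_X !EopZ !Eop_X !scalerA mulrAC.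
Qed.

Lemma Delta_bracket a b c v w f : (forall i, c i = a i + b i)%N ->
  Delta a v (Delta b w f) - Delta b w (Delta a v f) =
  dot v b *: Delta c w f - dot w a *: Delta c v f.
Proof.
move=> hc.
have xc : xmon K c = xmon K a * xmon K b :> P.
  by rewrite /xmon -big_split; apply: eq_bigr => i _; rewrite hc exprD.
rewrite !Delta_E !Eop_M !Eop_xmon (Eop_comm v w) xc -!mul_mpolyC.
ring.
Qed.

Lemma Delta_Xj a v j : Delta a v 'X_j = v j *: ('X_[mnm a + U_(j)] : P).
Proof.
rewrite Delta_E Eop_X.
have -> : \sum_i v i * (U_(j)%MM i)%:R = v j.
  rewrite (bigD1 j) //= mnm1E eqxx mulr1 big1 ?addr0 // => i ne.
  by rewrite mnm1E eq_sym (negbTE ne) mulr0.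
by rewrite xmonE -scalerAr mpolyXD.
Qed.

Lemma DeltaZ (a : 'I_n -> nat) (v : 'I_n -> K) c f : Delta a v (c *: f) = c *: Delta a v f.
Proof. by rewrite !Delta_E EopZ scalerAr. Qed.

Lemma DeltaD (a : 'I_n -> nat) (v : 'I_n -> K) f g : Delta a v (f + g) = Delta a v f + Delta a v g.
Proof. by rewrite !Delta_E EopD mulrDr. Qed.

Lemma Delta0 (a : 'I_n -> nat) (v : 'I_n -> K) : Delta a v 0 = 0.
Proof. by rewrite Delta_E Eop0 mulr0. Qed.

Lemma Delta_sum (a : 'I_n -> nat) (v : 'I_n -> K) m (F : 'I_m -> P) :
  Delta a v (\sum_(i < m) F i) = \sum_(i < m) Delta a v (F i).
Proof. exact: (big_morph (Delta a v) (DeltaD a v) (Delta0 a v)). Qed.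

End Alg.

Section Lie.
Variables (K : fieldType) (n : nat) (p q : 'I_n -> nat) (beta gamma : 'I_n -> K) (r : nat).
Local Notation P := {mpoly K[n]}.
Local Notation Op := (P -> P).
Local Notation O0 := (@op0 K n).
Hypothesis Hq0 : exists i, q i <> 0%N.
Hypothesis Hbeta : exists i, beta i != 0.
Hypothesis Hnp : ~ (exists c : K, forall i, gamma i = c * beta i).
Hypothesis Hbq : \sum_(i < n) beta i * (q i)%:R = 0.
Hypothesis Hr : \sum_(i < n) gamma i * (p i + r * q i)%:R = 0.
Hypothesis Hs : forall s, (s < r)%N -> \sum_(i < n) gamma i * (p i + s * q i)%:R != 0.

Definition ex (i : nat) : 'I_n -> nat :=
  if i is k.+1 then (fun x => p x + k * q x)%N else q.
Definition vv (i : nat) := if i is k.+1 then beta else gamma.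
Definition B (i : nat) : Op := Delta (ex i) (vv i).
Definition cc k := \sum_(i < n) gamma i * (p i + k * q i)%:R.
Local Notation N := r.+2.
Definition R (c : nat -> K) : Op := fun f => \sum_(i < N) c i *: B i f.

Lemma brB0S k f : lie_bracket (B 0) (B k.+1) f = cc k *: B k.+2 f.
Proof.
rewrite /lie_bracket /B /= (Delta_bracket (c := fun x => p x + k.+1 * q x)%N); last first.
  by move=> i; rewrite mulSn addnCA.
by rewrite /dot Hbq scale0r subr0.
Qed.

Lemma dot_beta k : dot beta (fun x => p x + k * q x)%N = dot beta p.
Proof.
rewrite /dot (eq_bigr (fun i => beta i * (p i)%:R + k%:R * (beta i * (q i)%:R))).
  by rewrite big_split /= -mulr_sumr Hbq mulr0 addr0.
by move=> i _ /=; rewrite natrD natrM mulrDr mulrCA.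
Qed.

Lemma brBSS k l f : lie_bracket (B k.+1) (B l.+1) f = 0.
Proof.
rewrite /lie_bracket /B /=.
rewrite (Delta_bracket (c := fun x => (p x + k * q x) + (p x + l * q x))%N) //.
by rewrite !dot_beta subrr.
Qed.

Lemma brBS0 k f : lie_bracket (B k.+1) (B 0) f = (- cc k) *: B k.+2 f.
Proof.
by rewrite /lie_bracket -opprB; have := brB0S k f; rewrite /lie_bracket => ->; rewrite scaleNr.
Qed.

Lemma sub_scale (S : Op -> Prop) a u : is_subspace S -> S u -> S (fun f => a *: u f).
Proof.
case=> S0 Sc Su.
have -> : (fun f => a *: u f) = op_comb a u O0.
  by apply: functional_extensionality => f; rewrite /op_comb /op0 addr0.
exact: Sc.
Qed.

Lemma sub_sum (S : Op -> Prop) m (F : 'I_m -> Op) : is_subspace S ->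
  (forall i, S (F i)) -> S (fun f => \sum_(i < m) F i f).
Proof.
elim: m F => [|m IH] F hS hF.
  have -> : (fun f => \sum_(i < 0) F i f) = O0.
    by apply: functional_extensionality => f; rewrite big_ord0.
  exact: hS.1.
have -> : (fun f => \sum_(i < m.+1) F i f) =
  op_comb 1 (fun f => \sum_(i < m) F (widen_ord (leqnSn m) i) f) (F ord_max).
  by apply: functional_extensionality => f; rewrite /op_comb scale1r big_ord_recr.
apply: hS.2 => //; exact: IH.
Qed.

Definition Z k (u : Op) := exists e, u = R e /\ forall m, (m < k)%N -> e m = 0.

Lemma Z_sub k : is_subspace (Z k).
Proof.
split.
  exists (fun _ => 0); split => //; apply: functional_extensionality => f.
  by rewrite /R /op0 big1 // => i _; rewrite scale0r.
move=> a u v [e [-> he]] [e' [-> he']]; exists (fun m => a * e m + e' m); split; last first.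
  by move=> m hm; rewrite he ?he' // mulr0 addr0.
apply: functional_extensionality => f.
rewrite /op_comb /R scaler_sumr -big_split; apply: eq_bigr => i _ /=.
by rewrite scalerDl scalerA.
Qed.

Lemma Z_op0 k : Z k O0.
Proof. exact: (Z_sub k).1. Qed.

Lemma Z_mono k k' u : (k' <= k)%N -> Z k u -> Z k' u.
Proof. by move=> hk [e [-> he]]; exists e; split => // m hm; apply: he; exact: leq_trans hm hk. Qed.

Lemma R_B i : (i < N)%N -> B i = R (fun m => (m == i)%:R).
Proof.
move=> hi; apply: functional_extensionality => f.
rewrite /R (bigD1 (Ordinal hi)) //= eqxx scale1r big1 ?addr0 // => j hj.
have : (j : nat) != i by apply: contra hj => /eqP h; apply/eqP; apply: val_inj.
by move/negbTE => ->; rewrite scale0r.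
Qed.

Lemma Z0_B i : (i < N)%N -> Z 0 (B i).
Proof. by move=> hi; rewrite (R_B hi); eexists; split. Qed.

Lemma Z_B k a : (k < N)%N \/ a = 0 -> Z k (fun f => a *: B k f).
Proof.
case=> [hk|->].
  rewrite (R_B hk); exists (fun m => a * (m == k)%:R); split.
    apply: functional_extensionality => f; rewrite /R scaler_sumr.
    by apply: eq_bigr => i _; rewrite scalerA.
  by move=> m hm; rewrite ltn_eqF // mulr0.
have -> : (fun f => 0 *: B k f) = O0.
  by apply: functional_extensionality => f; rewrite scale0r.
exact: Z_op0.
Qed.

Lemma brBZ i j : (i < N)%N -> (j < N)%N -> Z (maxn 2 j.+1) (lie_bracket (B i) (B j)).
Proof.
move=> hi hj; case: i hi => [|i] hi; case: j hj => [|j] hj.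
- have -> : lie_bracket (B 0) (B 0) = O0.
    by apply: functional_extensionality => f; rewrite /lie_bracket subrr.
  exact: Z_op0.
- have -> : lie_bracket (B 0) (B j.+1) = (fun f => cc j *: B j.+2 f).
    by apply: functional_extensionality => f; apply: brB0S.
  have -> : maxn 2 j.+2 = j.+2 by apply/maxn_idPr.
  apply: Z_B; case: (ltnP j.+2 N) => h; [by left | right].
  have -> : j = r by lia.
  exact: Hr.
- have -> : lie_bracket (B i.+1) (B 0) = (fun f => (- cc i) *: B i.+2 f).
    by apply: functional_extensionality => f; apply: brBS0.
  apply: (@Z_mono i.+2); first by [].
  apply: Z_B; case: (ltnP i.+2 N) => h; [by left | right].
  have -> : i = r by lia.
  by rewrite /cc Hr oppr0.
- have -> : lie_bracket (B i.+1) (B j.+1) = O0.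
    by apply: functional_extensionality => f; apply: brBSS.
  exact: Z_op0.
Qed.

Lemma RR c d f : R c (R d f) = \sum_(i < N) \sum_(j < N) (c i * d j) *: B i (B j f).
Proof.
rewrite {1}/R; apply: eq_bigr => i _.
rewrite /R {1}/B Delta_sum scaler_sumr; apply: eq_bigr => j _.
by rewrite DeltaZ scalerA.
Qed.

Lemma R_bracket c d : lie_bracket (R c) (R d) =
  fun f => \sum_(i < N) \sum_(j < N) (c i * d j) *: lie_bracket (B i) (B j) f.
Proof.
apply: functional_extensionality => f.
rewrite /lie_bracket !RR [X in _ - X]exchange_big -sumrB; apply: eq_bigr => i _.
rewrite -sumrB; apply: eq_bigr => j _.
by rewrite scalerBr [d _ * c _]mulrC.
Qed.

Lemma brZ k c d : (forall j, (j < k)%N -> d j = 0) ->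
  Z (maxn 2 k.+1) (lie_bracket (R c) (R d)).
Proof.
move=> hd; rewrite R_bracket; apply: sub_sum (Z_sub _) _ => i.
apply: sub_sum (Z_sub _) _ => j.
case: (ltnP j k) => hjk.
  rewrite hd // mulr0.
  have -> : (fun f => 0 *: lie_bracket (B i) (B j) f) = O0.
    by apply: functional_extensionality => f; rewrite scale0r.
  exact: Z_op0.
apply: sub_scale (Z_sub _) _.
apply: Z_mono (brBZ (ltn_ord i) (ltn_ord j)); lia.
Qed.

Local Notation g := (lie_gen (B 0) (Delta p beta)).

Lemma B1 : B 1 = Delta p beta.
Proof.
rewrite /B /=; congr Delta; apply: functional_extensionality => x.
by rewrite mul0n addn0.
Qed.

Lemma Bsucc k : (k < r)%N -> B k.+2 = op_comb (cc k)^-1 (lie_bracket (B 0) (B k.+1)) O0.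
Proof.
move=> hk; apply: functional_extensionality => f.
by rewrite /op_comb /op0 addr0 brB0S scalerA mulVf ?scale1r //; exact: Hs.
Qed.

Lemma subalg_B (S : Op -> Prop) : is_lie_subalgebra S -> S (B 0) -> S (B 1) ->
  forall i, (i < N)%N -> S (B i).
Proof.
move=> [hS hbr] h0 h1 [|k] hk //.
elim: k hk => [|k IH] hk //.
rewrite Bsucc; last by lia.
apply: hS.2; last exact: hS.1.
apply: hbr => //; apply: IH; lia.
Qed.

Lemma gV w : g w <-> exists c, w = R c.
Proof.
split.
  move=> hw; have : Z 0 w.
    apply: hw.
    - split; first exact: Z_sub.
      move=> u v [c [-> _]] [d [-> _]].
      by apply: Z_mono (brZ (k := 0) c (d := d) _).
    - exact: Z0_B.
    - by rewrite -B1; exact: Z0_B.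
  by case=> e [-> _]; exists e.
case=> c -> S hS h0 h1.
have hB := subalg_B hS h0 (eq_ind_r S h1 B1).
apply: sub_sum hS.1 _ => i; apply: sub_scale hS.1 _; apply: hB; exact: ltn_ord.
Qed.

Definition lst := B 0 :: [seq Delta (fun i => p i + k * q i)%N beta | k <- iota 0 r.+1].

Lemma lin_R c : lin_comb lst c = R c.
Proof.
apply: functional_extensionality => f.
have E : forall (s : seq Op) x i, nth O0 (x :: s) i.+1 = nth O0 s i by [].
rewrite /lin_comb /R.
have -> : size lst = N by rewrite /= size_map size_iota.
apply: eq_bigr => -[[|i] hi] _ //.
congr (_ *: _); rewrite /lst E.
by rewrite (nth_map 0%N) ?size_iota // nth_iota // add0n.
Qed.

Lemma coefR c j i0 : mcoeff (mnm (ex i0) + U_(j)) (R c 'X_j) =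
  \sum_(i < N) c i * vv i j * (mnm (ex i) == mnm (ex i0))%:R.
Proof.
rewrite /R (big_morph _ (mcoeffD _) (mcoeff0 _ _)); apply: eq_bigr => i _.
by rewrite /B Delta_Xj mcoeffZ mcoeffZ mcoeffX eqm_add2r mulrA.
Qed.

Lemma ex_inj k k' : mnm (ex k.+1) = mnm (ex k'.+1) -> k = k'.
Proof.
move=> h; case: Hq0 => i0 hi0.
have := congr1 (fun m : 'X_{1..n} => m i0) h; rewrite /= !mnmE => /eqP.
rewrite eqn_add2l eqn_mul2r => /orP [/eqP //|/eqP //].
Qed.

Lemma indep c : (forall f, R c f = 0) -> forall i, (i < N)%N -> c i = 0.
Proof.
move=> h.
have hc0 : c 0 = 0.
  apply/eqP/negPn/negP => nz; apply: Hnp.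
  pose s := \sum_(k < r.+1) c k.+1 * (mnm (ex k.+1) == mnm (ex 0))%:R.
  exists (- s / c 0) => j.
  have := coefR c j 0; rewrite h mcoeff0 big_ord_recl /= eqxx mulr1.
  have -> : \sum_(i < r.+1) c (lift ord0 i) * beta j * (mnm (ex (lift ord0 i)) == mnm q)%:R
      = beta j * s.
    by rewrite /s mulr_sumr; apply: eq_bigr => k _; rewrite lift0 [c _ * beta j]mulrC -mulrA.
  move=> /esym/eqP; rewrite addr_eq0 => /eqP H.
  apply: (mulfI nz); rewrite H; field; exact: nz.
move=> [|k] hk //.
case: Hbeta => jb hb.
have := coefR c jb k.+1; rewrite h mcoeff0 big_ord_recl hc0 !mul0r add0r.
rewrite (bigD1 (Ordinal (hk : (k < r.+1)%N))) //= eqxx mulr1 big1 ?addr0.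
  by move/esym/eqP; rewrite mulf_eq0 (negbTE hb) orbF => /eqP.
move=> kk hkk.
case: eqP => [e|]; last by rewrite mulr0.
have := @ex_inj (0 + kk) k e; rewrite add0n => ekk.
by exfalso; move: hkk; apply/negP; rewrite negbK; apply/eqP/val_inj.
Qed.

Lemma lcs_Z k w : lcs g k.+1 w -> Z k.+2 w.
Proof.
elim: k w => [|k IH] w /= hw; apply: hw (Z_sub _) _ => u [x [y [hx [hy ->]]]].
  case: ((gV x).1 hx) => c ->; case: ((gV y).1 hy) => d ->.
  exact: (brZ (k := 0) c (d := d)).
case: ((gV x).1 hx) => c ->; case: (IH y hy) => d [-> hd].
have := brZ c hd; by have -> : maxn 2 k.+3 = k.+3 by apply/maxn_idPr.
Qed.

Lemma B_lcs k : (k <= r)%N -> lcs g k (B k.+1).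
Proof.
elim: k => [|k IH] hk /=.
  by rewrite B1 => S _ _ h1.
rewrite Bsucc; last by lia.
move=> S hS hA; apply: hS.2; last exact: hS.1.
apply: hA; exists (B 0), (B k.+1); split; first by move=> S' _ h0 _.
split => //; apply: IH; lia.
Qed.

End Lie.

Theorem proposition2 (K : fieldType) (n : nat)
  (p q : 'I_n -> nat) (beta gamma : 'I_n -> K) (r : nat) :
  [pchar K] =i pred0 ->
  (exists i, p i <> 0%N) -> (exists i, q i <> 0%N) ->
  (exists i, beta i != 0) -> (exists i, gamma i != 0) ->
  ~ (exists c : K, forall i, gamma i = c * beta i) ->
  \sum_(i < n) beta i * (q i)%:R = 0 ->
  \sum_(i < n) gamma i * (p i + r * q i)%:R = 0 ->
  (forall s, (s < r)%N -> \sum_(i < n) gamma i * (p i + s * q i)%:R != 0) ->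
  let g := lie_gen (Delta q gamma) (Delta p beta) in
  has_dim g (r + 2) /\ step_nilpotent g (r + 1) /\
  is_basis g (Delta q gamma :: [seq Delta (fun i => p i + k * q i)%N beta | k <- iota 0 r.+1]).
Proof.
move=> _ _ Hq Hb _ Hnp Hbq Hr Hs g.
have Hl : is_basis g (lst p q beta gamma r).
  split.
    move=> c hc i hi; apply: (indep (p := p) (r := r) Hq Hb Hnp).
      by move=> f; rewrite -lin_R; exact: hc.
    by move: hi; rewrite /= size_map size_iota.
  move=> w; split.
    by case/(gV Hbq Hr Hs) => c ->; exists c; rewrite lin_R.
  by case=> c ->; apply/(gV Hbq Hr Hs); exists c; rewrite lin_R.
split.
  by exists (lst p q beta gamma r); split => //; rewrite /= size_map size_iota addn2.
split; last exact: Hl.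
split; first by rewrite addn1.
split.
  move=> w; rewrite addn1 => hw f.
  have [e [-> he]] := lcs_Z Hbq Hr Hs hw.
  by rewrite /R big1 // => i _; rewrite he ?scale0r.
exists (B p q beta gamma r.+1); split.
  by rewrite addn1 /=; apply: (B_lcs Hbq Hs).
case: Hb => jb hb; exists 'X_jb.
rewrite /B Delta_Xj scaler_eq0 negb_or hb /=.
apply/eqP => h; have := congr1 (mcoeff (mnm (ex p q r.+1) + U_(jb))) h.
by rewrite mcoeffX eqxx mcoeff0 => /eqP; rewrite oner_eq0.
Qed.
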